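(* The myopic sensing policy is not optimal in general. More precisely, both of the following hold for $N=6$, $k=3$, $T=2$: (a) there exist transition probabilities with $p_{11}>p_{01}$ and an initial belief vector $\omega(1)\in[0,1]^6$ for which some sensing policy achieves strictly larger expected total reward than the myopic sensing policy; (b) there exist transition probabilities with $p_{11}<p_{01}$ and an initial belief vector $\omega(1)\in[0,1]^6$ for which the same holds.
   Context: Opportunistic spectrum access model. There are $N$ channels. The state $S_i(t)\in\{0,1\}$ of channel $i$ in slot $t$ (0 = busy, 1 = idle) evolves as a two-state discrete-time Markov chain with transition probabilities $p_{ij}=\Pr(S_i(t+1)=j\mid S_i(t)=i)$. The chains are independent across channels and all have the same transition probabilities $p_{01},p_{11}\in[0,1]$. The initial states are independent with $\Pr(S_i(1)=1)=\omega_i(1)$. In each slot $t=1,\dots,T$, a user senses a set of exactly $k$ channels, chosen based on past actions and observations. It observes their states and obtains reward $1$ if at least one sensed channel is idle, and reward $0$ otherwise. The objective is the expected total reward over $T$ slots. Beliefs $\omega_i(t)$ (conditional probability that channel $i$ is idle in slot $t$) update as follows: $\omega_i(t+1)=p_{11}$ if $i$ was sensed and found idle; $\omega_i(t+1)=p_{01}$ if $i$ was sensed and found busy; and $\omega_i(t+1)=\omega_i(t)p_{11}+(1-\omega_i(t))p_{01}$ if $i$ was not sensed. The myopic sensing policy senses, in each slot, $k$ channels with the largest current beliefs. *)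

(* Defs.v *)
From Stdlib Require Import Reals List Bool.
Import ListNotations.
Open Scope R_scope.

(* Channels are indexed 0 .. N-1.
   A joint channel state is a list of N booleans (true = idle = 1, false = busy = 0).
   A sensing action is a list of N booleans: the mask of sensed channels.
   An observation is the list [sensed_i && state_i]; together with the action
   it encodes exactly the observed states of the sensed channels. *)
Definition state := list bool.
Definition action := list bool.
Definition history := list (action * list bool).  (* chronological order *)
Definition policy := history -> action.

Definition sumR (l : list R) : R := fold_right Rplus 0 l.
Definition prodR (l : list R) : R := fold_right Rmult 1 l.

Definition ntrue (l : list bool) : nat := length (filter (fun b => b) l).

Fixpoint all_states (n : nat) : list state :=
  match n with
  | O => [[]]
  | S m => flat_map (fun s => [false :: s; true :: s]) (all_states m)
  end.

Definition observe (a : action) (s : state) : list bool :=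
  map (fun p => andb (fst p) (snd p)) (combine a s).

Definition reward (a : action) (s : state) : R :=
  if existsb (fun b => b) (observe a s) then 1 else 0.

Definition trans1 (p01 p11 : R) (b b' : bool) : R :=
  if b then (if b' then p11 else 1 - p11)
  else (if b' then p01 else 1 - p01).

Definition trans_prob (p01 p11 : R) (s s' : state) : R :=
  prodR (map (fun p => trans1 p01 p11 (fst p) (snd p)) (combine s s')).

Definition init_prob (N : nat) (w : nat -> R) (s : state) : R :=
  prodR (map (fun i => if nth i s false then w i else 1 - w i) (seq 0 N)).

Fixpoint value_from (N : nat) (p01 p11 : R) (pol : policy) (t : nat)
    (h : history) (s : state) : R :=
  match t with
  | O => 0
  | S t' =>
      let a := pol h in
      reward a s +
      sumR (map (fun s' => trans_prob p01 p11 s s' *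
                   value_from N p01 p11 pol t' (h ++ [(a, observe a s)]) s')
                (all_states N))
  end.

Definition total_reward (N : nat) (p01 p11 : R) (w : nat -> R) (pol : policy)
    (T : nat) : R :=
  sumR (map (fun s => init_prob N w s * value_from N p01 p11 pol T [] s)
            (all_states N)).

Definition valid_policy (N k : nat) (pol : policy) : Prop :=
  forall h, length (pol h) = N /\ ntrue (pol h) = k.

Definition belief_update (p01 p11 : R) (w : nat -> R) (ao : action * list bool)
    : nat -> R :=
  fun i =>
    if nth i (fst ao) false then
      (if nth i (snd ao) false then p11 else p01)
    else w i * p11 + (1 - w i) * p01.

Definition belief (p01 p11 : R) (w1 : nat -> R) (h : history) : nat -> R :=
  fold_left (belief_update p01 p11) h w1.

(* myopic policy (any tie-breaking): in every slot it senses k channels with the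
   largest current beliefs *)
Definition is_myopic (N k : nat) (p01 p11 : R) (w1 : nat -> R) (pol : policy)
    : Prop :=
  forall h,
    let a := pol h in
    let b := belief p01 p11 w1 h in
    length a = N /\ ntrue a = k /\
    (forall i j, (i < N)%nat -> (j < N)%nat ->
       nth i a false = true -> nth j a false = false -> b j <= b i).

Definition myopic_suboptimal (N k T : nat) (p01 p11 : R) (w1 : nat -> R) : Prop :=
  exists pol, valid_policy N k pol /\
    forall mp, is_myopic N k p01 p11 w1 mp ->
      total_reward N p01 p11 w1 mp T < total_reward N p01 p11 w1 pol T.

(* Main.v *)
Require Import Defs.
From Stdlib Require Import Reals List.
From Stdlib Require Import QArith Qreals Lra Lia Bool.
Import ListNotations.
Open Scope R_scope.

Definition Qp (x y : Q) : Q := Qred (x + y).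
Definition Qm (x y : Q) : Q := Qred (x * y).
Definition Qs (x y : Q) : Q := Qred (x - y).

Lemma Q2R_Qp x y : Q2R (Qp x y) = Q2R x + Q2R y.
Proof. unfold Qp. rewrite (Qeq_eqR _ _ (Qred_correct _)). apply Q2R_plus. Qed.
Lemma Q2R_Qm x y : Q2R (Qm x y) = Q2R x * Q2R y.
Proof. unfold Qm. rewrite (Qeq_eqR _ _ (Qred_correct _)). apply Q2R_mult. Qed.
Lemma Q2R_Qs x y : Q2R (Qs x y) = Q2R x - Q2R y.
Proof. unfold Qs. rewrite (Qeq_eqR _ _ (Qred_correct _)). apply Q2R_minus. Qed.
Lemma Q2R_1 : Q2R 1 = 1. Proof. unfold Q2R; simpl; lra. Qed.
Lemma Q2R_0 : Q2R 0 = 0. Proof. unfold Q2R; simpl; lra. Qed.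

Definition sumQ (l : list Q) : Q := fold_right Qp 0%Q l.
Definition prodQ (l : list Q) : Q := fold_right Qm 1%Q l.

Lemma sumQ_ok l : Q2R (sumQ l) = sumR (map Q2R l).
Proof. induction l; simpl. apply Q2R_0. rewrite Q2R_Qp, IHl; reflexivity. Qed.
Lemma prodQ_ok l : Q2R (prodQ l) = prodR (map Q2R l).
Proof. induction l; simpl. apply Q2R_1. rewrite Q2R_Qm, IHl; reflexivity. Qed.

Definition trans1Q (q01 q11 : Q) (b b' : bool) : Q :=
  if b then (if b' then q11 else Qs 1 q11)
  else (if b' then q01 else Qs 1 q01).
Definition trans_probQ q01 q11 (s s' : state) : Q :=
  prodQ (map (fun p => trans1Q q01 q11 (fst p) (snd p)) (combine s s')).
Definition init_probQ (N : nat) (w : nat -> Q) (s : state) : Q :=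
  prodQ (map (fun i => if nth i s false then w i else Qs 1 (w i)) (seq 0 N)).
Definition rewardQ (a : action) (s : state) : Q :=
  if existsb (fun b => b) (observe a s) then 1%Q else 0%Q.

Fixpoint value_fromQ (N : nat) (q01 q11 : Q) (pol : policy) (t : nat)
    (h : history) (s : state) : Q :=
  match t with
  | O => 0%Q
  | S t' =>
      let a := pol h in
      Qp (rewardQ a s)
      (sumQ (map (fun s' => Qm (trans_probQ q01 q11 s s')
                   (value_fromQ N q01 q11 pol t' (h ++ [(a, observe a s)]) s'))
                (all_states N)))
  end.

Definition total_rewardQ N q01 q11 (w : nat -> Q) pol T : Q :=
  sumQ (map (fun s => Qm (init_probQ N w s) (value_fromQ N q01 q11 pol T [] s))
            (all_states N)).

Lemma trans_ok q01 q11 s s' :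
  Q2R (trans_probQ q01 q11 s s') = trans_prob (Q2R q01) (Q2R q11) s s'.
Proof.
  unfold trans_probQ, trans_prob. rewrite prodQ_ok, map_map. f_equal.
  apply map_ext. intros [[|] [|]]; simpl; rewrite ?Q2R_Qs, ?Q2R_1; reflexivity.
Qed.

Lemma reward_ok a s : Q2R (rewardQ a s) = reward a s.
Proof. unfold rewardQ, reward. destruct existsb. apply Q2R_1. apply Q2R_0. Qed.

Lemma value_ok N q01 q11 pol t : forall h s,
  Q2R (value_fromQ N q01 q11 pol t h s) = value_from N (Q2R q01) (Q2R q11) pol t h s.
Proof.
  induction t; intros h s; simpl. apply Q2R_0.
  rewrite Q2R_Qp, reward_ok, sumQ_ok, map_map. f_equal. f_equal.
  apply map_ext. intro s'. rewrite Q2R_Qm, trans_ok, IHt. reflexivity.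
Qed.

Lemma total_ok N q01 q11 w pol T :
  Q2R (total_rewardQ N q01 q11 w pol T) =
  total_reward N (Q2R q01) (Q2R q11) (fun i => Q2R (w i)) pol T.
Proof.
  unfold total_rewardQ, total_reward. rewrite sumQ_ok, map_map. f_equal.
  apply map_ext. intro s. rewrite Q2R_Qm, value_ok. f_equal.
  unfold init_probQ, init_prob. rewrite prodQ_ok, map_map. f_equal.
  apply map_ext. intro i. destruct nth; rewrite ?Q2R_Qs, ?Q2R_1; reflexivity.
Qed.

Lemma total2_ext N p01 p11 w pol1 pol2 :
  pol1 [] = pol2 [] ->
  (forall s, In s (all_states N) ->
     pol1 [(pol1 [], observe (pol1 []) s)] = pol2 [(pol2 [], observe (pol2 []) s)]) ->
  total_reward N p01 p11 w pol1 2 = total_reward N p01 p11 w pol2 2.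
Proof.
  intros H1 H2. unfold total_reward. f_equal. apply map_ext_in. intros s Hs.
  simpl value_from. simpl app. rewrite (H2 s Hs), H1. reflexivity.
Qed.

Lemma all_states_complete l : In l (all_states (length l)).
Proof.
  induction l as [|b l IH]; simpl. auto.
  apply in_flat_map. exists l. split; auto. destruct b; simpl; auto.
Qed.

Definition checkQ (a : list bool) (bq : nat -> Q) : bool :=
  forallb (fun i => forallb (fun j =>
     implb (nth i a false && negb (nth j a false)) (Qle_bool (bq j) (bq i)))
     (seq 0 6)) (seq 0 6).

Fixpoint eqbl (a b : list bool) : bool :=
  match a, b with
  | [], [] => true
  | x :: a', y :: b' => Bool.eqb x y && eqbl a' b'
  | _, _ => false
  end.
Lemma eqbl_ok a b : eqbl a b = true -> a = b.
Proof.
  revert b; induction a as [|x a IH]; intros [|y b]; simpl; try discriminate; auto.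
  intro H. apply andb_prop in H as [H1 H2]. apply Bool.eqb_prop in H1. subst.
  f_equal; auto.
Qed.

Lemma myopic_check p01 p11 w1 mp h (bq : nat -> Q) :
  is_myopic 6 3 p01 p11 w1 mp ->
  (forall i, (i < 6)%nat -> belief p01 p11 w1 h i = Q2R (bq i)) ->
  In (mp h) (all_states 6) /\ Nat.eqb (ntrue (mp h)) 3 && checkQ (mp h) bq = true.
Proof.
  intros Hm Hb. destruct (Hm h) as [Hl [Hn Ho]].
  split. rewrite <- Hl. apply all_states_complete.
  rewrite Hn. simpl. unfold checkQ. apply forallb_forall. intros i Hi.
  apply forallb_forall. intros j Hj. apply in_seq in Hi, Hj.
  destruct (nth i (mp h) false) eqn:Ei; simpl; auto.
  destruct (nth j (mp h) false) eqn:Ej; simpl; auto.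
  apply Qle_bool_iff. apply Rle_Qle. rewrite <- !Hb by lia.
  apply Ho; auto; lia.
Qed.

Definition lookup (dflt : action) (tab : list (list bool * action)) (o : list bool) : action :=
  match find (fun p => eqbl (fst p) o) tab with
  | Some p => snd p
  | None => dflt
  end.

Definition mkpol (A : action) (tab : list (list bool * action)) : policy :=
  fun h => match h with
           | [] => A
           | [(_, o)] => lookup A tab o
           | _ => A
           end.

Lemma lookup_in A tab o : In (lookup A tab o) (A :: map snd tab).
Proof.
  unfold lookup. destruct (find (fun p => eqbl (fst p) o) tab) eqn:E.
  - right. apply find_some in E. apply in_map. tauto.
  - left. reflexivity.
Qed.

Lemma mkpol_valid A tab :
  forallb (fun x => Nat.eqb (length x) 6 && Nat.eqb (ntrue x) 3) (A :: map snd tab) = true ->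
  valid_policy 6 3 (mkpol A tab).
Proof.
  intros H h.
  assert (Hin : In (mkpol A tab h) (A :: map snd tab)).
  { unfold mkpol. destruct h as [|[a o] [|x y]]; [left; reflexivity| |left; reflexivity].
    apply lookup_in. }
  rewrite forallb_forall in H. apply H in Hin.
  apply andb_prop in Hin as [H1 H2]. apply Nat.eqb_eq in H1, H2. auto.
Qed.

Definition bq1 (q01 q11 : Q) (w : nat -> Q) (A o : list bool) : nat -> Q :=
  fun i => if nth i A false then (if nth i o false then q11 else q01)
           else Qp (Qm (w i) q11) (Qm (Qs 1 (w i)) q01).

Lemma bq1_ok q01 q11 w A o i :
  belief (Q2R q01) (Q2R q11) (fun i => Q2R (w i)) [(A, o)] i = Q2R (bq1 q01 q11 w A o i).
Proof.
  unfold belief, bq1. simpl. unfold belief_update. simpl.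
  destruct (nth i A false); [destruct (nth i o false); reflexivity|].
  rewrite Q2R_Qp, !Q2R_Qm, Q2R_Qs, Q2R_1. reflexivity.
Qed.

Definition uniq_check (q01 q11 : Q) (w : nat -> Q) (A : action)
  (tab : list (list bool * action)) : bool :=
  forallb (fun a => implb (Nat.eqb (ntrue a) 3 && checkQ a w) (eqbl a A)) (all_states 6) &&
  forallb (fun s => forallb (fun a =>
     implb (Nat.eqb (ntrue a) 3 && checkQ a (bq1 q01 q11 w A (observe A s)))
           (eqbl a (lookup A tab (observe A s)))) (all_states 6)) (all_states 6).

Lemma myopic_is_mkpol q01 q11 (w : nat -> Q) A tab mp :
  uniq_check q01 q11 w A tab = true ->
  is_myopic 6 3 (Q2R q01) (Q2R q11) (fun i => Q2R (w i)) mp ->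
  total_reward 6 (Q2R q01) (Q2R q11) (fun i => Q2R (w i)) mp 2 =
  total_reward 6 (Q2R q01) (Q2R q11) (fun i => Q2R (w i)) (mkpol A tab) 2.
Proof.
  intros Hu Hm. unfold uniq_check in Hu. apply andb_prop in Hu as [Hu1 Hu2].
  rewrite forallb_forall in Hu1, Hu2.
  assert (E0 : mp [] = A).
  { destruct (myopic_check _ _ _ mp [] w Hm) as [Hin Hc].
    { intros i _. reflexivity. }
    apply Hu1 in Hin. rewrite Hc in Hin. simpl in Hin. apply eqbl_ok; auto. }
  apply total2_ext. exact E0.
  intros s Hs. rewrite E0. simpl mkpol.
  specialize (Hu2 s Hs). rewrite forallb_forall in Hu2.
  destruct (myopic_check _ _ _ mp [(A, observe A s)] (bq1 q01 q11 w A (observe A s)) Hm)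
    as [Hin Hc].
  { intros i _. apply bq1_ok. }
  apply Hu2 in Hin. rewrite Hc in Hin. simpl in Hin. apply eqbl_ok; auto.
Qed.

Definition Qltb (x y : Q) : bool := negb (Qle_bool y x).
Lemma Qltb_ok x y : Qltb x y = true -> (x < y)%Q.
Proof.
  unfold Qltb. intro H. apply Qnot_le_lt. intro H'. apply Qle_bool_iff in H'.
  rewrite H' in H. discriminate.
Qed.

Lemma main_lemma q01 q11 (w : nat -> Q) A tab B tab2 :
  uniq_check q01 q11 w A tab = true ->
  forallb (fun x => Nat.eqb (length x) 6 && Nat.eqb (ntrue x) 3) (B :: map snd tab2) = true ->
  Qltb (total_rewardQ 6 q01 q11 w (mkpol A tab) 2)
           (total_rewardQ 6 q01 q11 w (mkpol B tab2) 2) = true ->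
  myopic_suboptimal 6 3 2 (Q2R q01) (Q2R q11) (fun i => Q2R (w i)).
Proof.
  intros Hu Hv Hlt. exists (mkpol B tab2). split. apply mkpol_valid; auto.
  intros mp Hm. rewrite (myopic_is_mkpol _ _ _ _ _ _ Hu Hm).
  rewrite <- !total_ok. apply Qlt_Rlt. apply Qltb_ok. exact Hlt.
Qed.

Definition wa (i : nat) : Q := nth i [1#2; 5#8; 1#4; 7#8; 1; 3#8]%Q 0%Q.
Definition Aa := [false; true; false; true; true; false].
Definition taba :=
[([false; false; false; false; false; false], [true; false; true; false; false; true]);
 ([false; false; false; false; true; false], [true; false; false; false; true; true]);
 ([false; false; false; true; false; false], [true; false; false; true; false; true]);
 ([false; false; false; true; true; false], [true; false; false; true; true; false]);
 ([false; true; false; false; false; false], [true; true; false; false; false; true]);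
 ([false; true; false; false; true; false], [true; true; false; false; true; false]);
 ([false; true; false; true; false; false], [true; true; false; true; false; false]);
 ([false; true; false; true; true; false], [false; true; false; true; true; false])].
Definition Ba := [true; true; false; false; true; false].
Definition tabBa :=
[([false; false; false; false; false; false], [false; false; true; true; false; true]);
 ([false; false; false; false; true; false], [false; false; false; true; true; true]);
 ([false; true; false; false; false; false], [false; true; false; true; false; true]);
 ([false; true; false; false; true; false], [false; true; false; true; true; false]);
 ([true; false; false; false; false; false], [true; false; false; true; false; true]);
 ([true; false; false; false; true; false], [true; false; false; true; true; false]);
 ([true; true; false; false; false; false], [true; true; false; true; false; false]);
 ([true; true; false; false; true; false], [true; true; false; false; true; false])].

Definition wb (i : nat) : Q := nth i [1#4; 1; 5#8; 3#8; 1; 1#2]%Q 0%Q.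
Definition Ab := [false; true; true; false; true; false].
Definition tabb :=
[([false; false; false; false; false; false], [false; true; true; false; true; false]);
 ([false; false; false; false; true; false], [true; true; true; false; false; false]);
 ([false; false; true; false; false; false], [true; true; false; false; true; false]);
 ([false; false; true; false; true; false], [true; true; false; true; false; false]);
 ([false; true; false; false; false; false], [true; false; true; false; true; false]);
 ([false; true; false; false; true; false], [true; false; true; true; false; false]);
 ([false; true; true; false; false; false], [true; false; false; true; true; false]);
 ([false; true; true; false; true; false], [true; false; false; true; false; true])].
Definition Bb := [false; false; false; true; true; true].
Definition tabBb :=
[([false; false; false; false; false; false], [false; false; false; true; true; true]);
 ([false; false; false; false; false; true], [true; false; false; true; true; false]);
 ([false; false; false; false; true; false], [true; false; false; true; false; true]);
 ([false; false; false; false; true; true], [true; false; true; true; false; false]);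
 ([false; false; false; true; false; false], [true; false; false; false; true; true]);
 ([false; false; false; true; false; true], [true; false; true; false; true; false]);
 ([false; false; false; true; true; false], [true; false; true; false; false; true]);
 ([false; false; false; true; true; true], [true; true; true; false; false; false])].

Lemma ua : uniq_check 0 (3#8) wa Aa taba = true. Proof. vm_compute. reflexivity. Qed.
Lemma va : forallb (fun x => Nat.eqb (length x) 6 && Nat.eqb (ntrue x) 3) (Ba :: map snd tabBa) = true.
Proof. vm_compute. reflexivity. Qed.
Lemma la : Qltb (total_rewardQ 6 0 (3#8) wa (mkpol Aa taba) 2)
                    (total_rewardQ 6 0 (3#8) wa (mkpol Ba tabBa) 2) = true.
Proof. vm_compute. reflexivity. Qed.

Lemma ub : uniq_check (1#2) (3#8) wb Ab tabb = true. Proof. vm_compute. reflexivity. Qed.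
Lemma vb : forallb (fun x => Nat.eqb (length x) 6 && Nat.eqb (ntrue x) 3) (Bb :: map snd tabBb) = true.
Proof. vm_compute. reflexivity. Qed.
Lemma lb : Qltb (total_rewardQ 6 (1#2) (3#8) wb (mkpol Ab tabb) 2)
                    (total_rewardQ 6 (1#2) (3#8) wb (mkpol Bb tabBb) 2) = true.
Proof. vm_compute. reflexivity. Qed.

Lemma Q01 (x : Q) : (0 <= x <= 1)%Q -> 0 <= Q2R x <= 1.
Proof.
  intros [H1 H2]. rewrite <- Q2R_0, <- Q2R_1. split; apply Qle_Rle; auto.
Qed.

Theorem theorem3 :
  (exists (p01 p11 : R) (w1 : nat -> R),
     0 <= p01 <= 1 /\ 0 <= p11 <= 1 /\ p11 > p01 /\
     (forall i, (i < 6)%nat -> 0 <= w1 i <= 1) /\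
     myopic_suboptimal 6 3 2 p01 p11 w1) /\
  (exists (p01 p11 : R) (w1 : nat -> R),
     0 <= p01 <= 1 /\ 0 <= p11 <= 1 /\ p11 < p01 /\
     (forall i, (i < 6)%nat -> 0 <= w1 i <= 1) /\
     myopic_suboptimal 6 3 2 p01 p11 w1).
Proof.
  split.
  - exists (Q2R 0), (Q2R (3#8)), (fun i => Q2R (wa i)).
    split; [apply Q01; split; vm_compute; discriminate|].
    split; [apply Q01; split; vm_compute; discriminate|].
    split; [apply Qlt_Rlt; reflexivity|].
    split; [|exact (main_lemma _ _ _ _ _ _ _ ua va la)].
    intros i Hi. apply Q01.
    do 6 (destruct i as [|i]; [split; vm_compute; discriminate|]). lia.
  - exists (Q2R (1#2)), (Q2R (3#8)), (fun i => Q2R (wb i)).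
    split; [apply Q01; split; vm_compute; discriminate|].
    split; [apply Q01; split; vm_compute; discriminate|].
    split; [apply Qlt_Rlt; reflexivity|].
    split; [|exact (main_lemma _ _ _ _ _ _ _ ub vb lb)].
    intros i Hi. apply Q01.
    do 6 (destruct i as [|i]; [split; vm_compute; discriminate|]). lia.
Qed.
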